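(* Let $\mathcal{T},\mathcal{U},\mathcal{B}$ be tile sets with mutually consistent frequencies such that $\mathcal{B}$ consists only of exact tiles and $\mathrm{area}(\mathcal{T})\cap\mathrm{area}(\mathcal{U})\subseteq\mathrm{area}(\mathcal{B})$. Then $d(\mathcal{T},\mathcal{U};\mathcal{B})=1$.
   Context: Fix $n,m\ge1$; $\mathcal{D}$ is the set of $n\times m$ binary matrices. A tile is $T=(t(T),a(T))$ with nonempty $t(T)\subseteq\{1..n\}$, $a(T)\subseteq\{1..m\}$, $\mathrm{area}(T)=t(T)\times a(T)$, $\mathrm{area}(\mathcal{T})=\bigcup_{T\in\mathcal{T}}\mathrm{area}(T)$. $\mathrm{fr}(T;D)=\frac1{|\mathrm{area}(T)|}\sum_{(i,j)\in\mathrm{area}(T)}D(i,j)$, $\mathrm{fr}(T;p)=\sum_Dp(D)\mathrm{fr}(T;D)$. Each tile carries a target frequency $\alpha_T$; tile sets are consistent if some distribution on $\mathcal{D}$ attains all target frequencies simultaneously. For a tile set $\mathcal{T}$, $p^*_{\mathcal{T}}$ is the entropy-maximising distribution among those with $\mathrm{fr}(T;p)=\alpha_T$ for all $T\in\mathcal{T}$. $\mathrm{KL}(\mathcal{T}\|\mathcal{U})=\mathrm{KL}(p^*_{\mathcal{T}}\|p^*_{\mathcal{U}})$. A tile is exact if its frequency is $0$ or $1$. With $\mathcal{M}=\mathcal{T}\cup\mathcal{U}\cup\mathcal{B}$, $d(\mathcal{T},\mathcal{U};\mathcal{B})=\frac{\mathrm{KL}(\mathcal{M}\|\mathcal{U}\cup\mathcal{B})+\mathrm{KL}(\mathcal{M}\|\mathcal{T}\cup\mathcal{B})}{\mathrm{KL}(\mathcal{M}\|\mathcal{B})}$,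 defined as $1$ if $\mathrm{KL}(\mathcal{M}\|\mathcal{B})=0$. *)

(* Defs.v *)
From mathcomp Require Import all_boot.
From Stdlib Require Import Reals ClassicalEpsilon.

Set Implicit Arguments.
Unset Strict Implicit.
Unset Printing Implicit Defensive.

Section TileDefs.

Variables n m : nat.

Definition bmat := {ffun 'I_n * 'I_m -> bool}.

Record tile := Tile { trows : {set 'I_n}; tcols : {set 'I_m}; talpha : R }.

Definition valid_tile (T : tile) : Prop :=
  trows T != set0 /\ tcols T != set0.

(* A tile set; union of tile sets is concatenation. *)
Definition tileset := seq tile.

Definition rsum (I : finType) (P : pred I) (F : I -> R) : R :=
  \big[Rplus/R0]_(i in P) F i.

Definition area_size (T : tile) : R := INR (#|trows T| * #|tcols T|).

Definition fr (T : tile) (D : bmat) : R :=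
  Rdiv (rsum (mem (trows T)) (fun i =>
          rsum (mem (tcols T)) (fun j => if D (i, j) then R1 else R0)))
       (area_size T).

Definition is_distr (p : bmat -> R) : Prop :=
  (forall D, Rle R0 (p D)) /\ rsum predT p = R1.

Definition fr_p (T : tile) (p : bmat -> R) : R :=
  rsum predT (fun D => Rmult (p D) (fr T D)).

Definition feasible (Ts : tileset) (p : bmat -> R) : Prop :=
  is_distr p /\ forall T, List.In T Ts -> fr_p T p = talpha T.

Definition consistent (Ts : tileset) : Prop := exists p, feasible Ts p.

Definition xlnx (x : R) : R :=
  if Rlt_dec R0 x then Rmult x (ln x) else R0.

Definition entropy (p : bmat -> R) : R := Ropp (rsum predT (fun D => xlnx (p D))).

Definition is_maxent (Ts : tileset) (p : bmat -> R) : Prop :=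
  feasible Ts p /\ forall q, feasible Ts q -> Rle (entropy q) (entropy p).

(* p*_Ts : the entropy maximiser (chosen by Hilbert's epsilon; it exists and
   is unique whenever Ts is consistent). *)
Definition pstar (Ts : tileset) : bmat -> R :=
  epsilon (inhabits (fun _ : bmat => R0)) (is_maxent Ts).

Definition KLdiv (p q : bmat -> R) : R :=
  rsum predT (fun D =>
    if Rlt_dec R0 (p D) then Rmult (p D) (ln (Rdiv (p D) (q D))) else R0).

Definition KL (Ts Us : tileset) : R := KLdiv (pstar Ts) (pstar Us).

Definition exact_tile (T : tile) : Prop := talpha T = R0 \/ talpha T = R1.

Definition in_area (Ts : tileset) (i : 'I_n) (j : 'I_m) : Prop :=
  exists T, List.In T Ts /\ i \in trows T /\ j \in tcols T.

Definition dTUB (Ts Us Bs : tileset) : R :=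
  let Ms := Ts ++ Us ++ Bs in
  if Req_EM_T (KL Ms Bs) R0 then R1
  else Rdiv (Rplus (KL Ms (Us ++ Bs)) (KL Ms (Ts ++ Bs))) (KL Ms Bs).

End TileDefs.

(* Main.v *)
From Stdlib Require Import Reals Lra Psatz ClassicalEpsilon FunctionalExtensionality.
From Stdlib Require List.
Require Import Defs.

Section StdlibPart.
Local Open Scope R_scope.

Lemma ln_le_sub1 y : 0 < y -> ln y <= y - 1.
Proof. intro H. pose proof (exp_ineq1_le (ln y)). rewrite exp_ln in H0; lra. Qed.

Lemma ln_lt_sub1 y : 0 < y -> y <> 1 -> ln y < y - 1.
Proof.
intros H H1. assert (ln y <> 0). { apply ln_neq_0; auto. }
pose proof (exp_ineq1 (ln y) H0). rewrite exp_ln in H2; lra.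
Qed.

Lemma xlnx_pos x : 0 < x -> xlnx x = x * ln x.
Proof. intro H; unfold xlnx; destruct (Rlt_dec R0 x); [simpl; reflexivity| lra]. Qed.
Lemma xlnx_npos x : x <= 0 -> xlnx x = 0.
Proof. intro H; unfold xlnx; destruct (Rlt_dec R0 x); [lra| simpl; reflexivity]. Qed.

Lemma xlnx_cont x : continuity_pt xlnx x.
Proof.
destruct (Rlt_le_dec 0 x) as [Hx|Hx].
- apply continuity_pt_locally_ext with (f := fun y => y * ln y) (a := x); auto.
  + intros y Hy. unfold Rdist in Hy. apply Rabs_def2 in Hy.
    rewrite xlnx_pos; [reflexivity| lra].
  + apply continuity_pt_mult; [apply derivable_continuous_pt; apply derivable_pt_id|].
    apply derivable_continuous_pt. exists (/ x). apply derivable_pt_lim_ln; auto.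
- destruct (Rle_lt_or_eq_dec _ _ Hx) as [Hx'|Hx'].
  + apply continuity_pt_locally_ext with (f := fun _ => 0) (a := - x); [lra| |].
    * intros y Hy. unfold Rdist in Hy. apply Rabs_def2 in Hy.
      rewrite xlnx_npos; [reflexivity| lra].
    * apply continuity_pt_const. intros a b; reflexivity.
  + subst x. intros eps Heps.
    exists (Rmin 1 (eps * eps / 4)). split.
    * apply Rmin_pos; nra.
    * intros y [_ Hy]. simpl in Hy |- *. unfold Rdist in Hy |- *.
      rewrite (xlnx_npos 0) by lra. rewrite Rminus_0_r in Hy |- *.
      destruct (Rle_lt_dec y 0) as [Hy0|Hy0].
      { rewrite xlnx_npos by lra. rewrite Rabs_R0; lra. }
      rewrite xlnx_pos by lra.
      assert (Hy1 : y < 1) by (rewrite Rabs_right in Hy by lra; pose proof (Rmin_l 1 (eps*eps/4)); lra).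
      assert (Hy2 : y < eps*eps/4) by (rewrite Rabs_right in Hy by lra; pose proof (Rmin_r 1 (eps*eps/4)); lra).
      set (z := sqrt y).
      assert (Hz : 0 < z) by (apply sqrt_lt_R0; lra).
      assert (Hzz : z * z = y) by (apply sqrt_sqrt; lra).
      assert (Hlny : ln y = 2 * ln z) by (rewrite <- Hzz, ln_mult by lra; ring).
      assert (Hl : ln (/ z) <= / z - 1) by (apply ln_le_sub1; apply Rinv_0_lt_compat; lra).
      rewrite ln_Rinv in Hl by lra.
      assert (Hlnyneg : ln y < 0) by (rewrite <- ln_1; apply ln_increasing; lra).
      rewrite Rabs_left by nra.
      assert (Hzi : z * / z = 1) by (field; lra).
      assert (Hze : z < eps / 2) by nra.
      rewrite Hlny. 
      assert (- (y * (2 * ln z)) <= 2 * z * z * (/ z - 1)) by (rewrite <- Hzz; nra).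
      nra.
Qed.

Lemma hh_cont_std x : continuity_pt (fun y => Ropp (Rplus (xlnx y) (xlnx (Rminus R1 y)))) x.
Proof.
assert (H : continuity_pt (opp_fct (plus_fct xlnx (comp xlnx (minus_fct (fct_cte R1) id)))) x).
{ apply continuity_pt_opp, continuity_pt_plus; [apply xlnx_cont|].
  apply continuity_pt_comp; [|apply xlnx_cont].
  apply continuity_pt_minus; [apply continuity_pt_const; intros a b; reflexivity|].
  apply derivable_continuous_pt, derivable_pt_id. }
exact H.
Qed.

End StdlibPart.

From HB Require Import structures.
From mathcomp Require Import all_boot all_order all_algebra.
From mathcomp Require Import boolp classical_sets reals topology normedtype derive.
From mathcomp Require Import Rstruct Rstruct_topology ring lra.
Import Order.TTheory GRing.Theory Num.Theory.
Local Open Scope ring_scope.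
Bind Scope ring_scope with R.
Local Arguments xlnx _%_ring_scope.
Local Arguments ln _%_ring_scope.

Lemma R0E : R0 = 0. Proof. reflexivity. Qed.
Lemma R1E : R1 = 1. Proof. reflexivity. Qed.

Lemma ex_max_box (k : nat) (C : set 'rV[R]_k) (f : 'rV[R]_k -> R) :
  (exists v, C v) -> closed C ->
  (forall v, C v -> forall i, 0 <= v ord0 i <= 1) -> continuous f ->
  exists c, C c /\ forall t, C t -> f t <= f c.
Proof.
move=> [v0 Cv0] clC box cf.
have cB : compact [set v : 'rV[R]_k | forall i, `[0, 1]%classic (v ord0 i)].
  exact: (@rV_compact R k (fun=> `[0, 1]%classic) (fun=> @segment_compact R 0 1)).
have cC : compact C.
  apply: (@subclosed_compact _ C _ clC cB) => v Cv i /=.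
  by rewrite in_itv /=; apply: box.
have [c cC' H] := compact_EVT_max (ex_intro _ v0 Cv0) cC (continuous_subspaceT cf).
exists c; split; first by rewrite inE in cC'.
by move=> t Ct; apply: H; rewrite inE.
Qed.

Lemma cont_coord (k : nat) (h : R -> R) (i : 'I_k) : continuous h ->
  continuous (fun v : 'rV[R]_k => h (v ord0 i)).
Proof.
move=> ch v; apply: continuous_comp; first exact: coord_continuous.
exact: ch.
Qed.

Lemma cont_sum (k : nat) (I : Type) (s : seq I) (F : I -> 'rV[R]_k -> R) :
  (forall i, continuous (F i)) -> continuous (fun v => \sum_(i <- s) F i v).
Proof.
move=> cF; elim: s => [|a s IH].
  under eq_fun do rewrite big_nil. exact: cst_continuous.
under eq_fun do rewrite big_cons.
by move=> v; exact: (@continuousD R R^o _ (F a) _ v (cF a v) (IH v)).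
Qed.

Lemma closed_eqf (k : nat) (g : 'rV[R]_k -> R) (a : R) : continuous g ->
  closed [set v | g v = a].
Proof. by move=> cg; exact: (proj1 (continuous_closedP g) cg _ (@closed_eq R a)). Qed.
Lemma closed_lef (k : nat) (g : 'rV[R]_k -> R) (a : R) : continuous g ->
  closed [set v | g v <= a].
Proof. by move=> cg; exact: (proj1 (continuous_closedP g) cg _ (@closed_le R a)). Qed.
Lemma closed_gef (k : nat) (g : 'rV[R]_k -> R) (a : R) : continuous g ->
  closed [set v | a <= g v].
Proof. by move=> cg; exact: (proj1 (continuous_closedP g) cg _ (@closed_ge R a)). Qed.

Lemma cont_pt (h : R -> R) : (forall x, continuity_pt h x) -> continuous h.
Proof. by move=> H x; apply/continuity_pt_cvg. Qed.

Section Alg.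
Variables n m : nat.
Local Notation cell := ('I_n * 'I_m)%type.
Local Notation bm := (bmat n m).

Definition gf (mu : cell -> R) (c : cell) (b : bool) : R := if b then mu c else 1 - mu c.
Definition prodd (mu : cell -> R) (D : bm) : R := \prod_c gf mu c (D c).
Definition ind (b : bool) : R := if b then 1 else 0.
Definition marg (q : bm -> R) (c : cell) : R := \sum_D q D * ind (D c).
Definition boxv (mu : cell -> R) := forall c, 0 <= mu c <= 1.

Lemma sum_prod (G : cell -> bool -> R) :
  \sum_(D : bm) \prod_c G c (D c) = \prod_c (G c true + G c false).
Proof.
rewrite /bmat -bigA_distr_bigA /=.
apply: eq_bigr => c _; by rewrite big_bool.
Qed.

Lemma prod_pick (c0 : cell) (x : cell -> R) :
  \prod_c (if c == c0 then x c else 1) = x c0.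
Proof.
rewrite (bigD1 c0) //= eqxx big1 ?mulr1 // => c /negbTE ->; done.
Qed.

Lemma marg_prod (mu : cell -> R) (c0 : cell) (phi : bool -> R) :
  \sum_(D : bm) prodd mu D * phi (D c0) = mu c0 * phi true + (1 - mu c0) * phi false.
Proof.
transitivity (\sum_(D : bm) \prod_c (gf mu c (D c) * (if c == c0 then phi (D c) else 1))).
  apply: eq_bigr => D _; rewrite big_split /= prod_pick; done.
rewrite (sum_prod (fun c b => gf mu c b * (if c == c0 then phi b else 1))) (bigD1 c0) //= eqxx big1 ?mulr1 //.
move=> c /negbTE ->; rewrite !mulr1 /gf; lra.
Qed.

Lemma prodd_sum (mu : cell -> R) : \sum_(D : bm) prodd mu D = 1.
Proof.
rewrite /prodd (sum_prod (gf mu)) big1 // => c _; rewrite /gf; lra.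
Qed.

Lemma prodd_ge0 mu D : boxv mu -> 0 <= prodd mu D.
Proof.
move=> hb; apply: prodr_ge0 => c _; rewrite /gf; case: (D c); have := hb c; lra.
Qed.

Lemma marg_prodd mu c : marg (prodd mu) c = mu c.
Proof. rewrite /marg (marg_prod mu c ind) /ind; lra. Qed.

Lemma exp_gen (q : bm -> R) c (phi : bool -> R) : \sum_D q D = 1 ->
  \sum_D q D * phi (D c) = marg q c * phi true + (1 - marg q c) * phi false.
Proof.
move=> hq.
transitivity (\sum_D (q D * phi false + (phi true - phi false) * (q D * ind (D c)))).
  by apply: eq_bigr => D _; rewrite /ind; case: (D c); ring.
rewrite big_split /= -big_distrl /= -big_distrr /= hq -/(marg q c); ring.
Qed.

Lemma lnM x y : 0 < x -> 0 < y -> ln (x * y) = ln x + ln y.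
Proof. by move=> /RltP hx /RltP hy; rewrite ln_mult. Qed.
Lemma lnV x : 0 < x -> ln x^-1 = - ln x.
Proof. by move=> /RltP hx; rewrite -RealsE ln_Rinv. Qed.
Lemma ln1 : ln 1 = 0.
Proof. exact: ln_1. Qed.
Lemma ln_le x : 0 < x -> ln x <= x - 1.
Proof. by move=> /RltP hx; apply/RleP; apply: ln_le_sub1. Qed.
Lemma ln_lt x : 0 < x -> x != 1 -> ln x < x - 1.
Proof. by move=> /RltP hx /eqP h1; apply/RltP; apply: ln_lt_sub1. Qed.

Arguments lnM {x y}.
Arguments lnV {x}.
Arguments ln_le {x}.
Arguments ln_lt {x}.
Definition lnz (x : R) : R := if 0 < x then ln x else 0.
Lemma xlnxE x : xlnx x = x * lnz x.
Proof.
rewrite /xlnx /lnz; case: (Rlt_dec R0 x) => [/RltP h|h] /=; first by rewrite h.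
case: ifP => [/RltP //|_]; by rewrite mulr0.
Qed.
Lemma xlnx0 : xlnx 0 = 0.
Proof. by rewrite xlnxE mul0r. Qed.

Lemma ln_prod_seq (s : seq cell) (a : cell -> R) : (forall c, 0 < a c) ->
  ln (\prod_(c <- s) a c) = \sum_(c <- s) ln (a c).
Proof.
move=> ha; elim: s => [|c s IH]; first by rewrite !big_nil ln1.
rewrite !big_cons lnM ?IH //; exact: prodr_gt0.
Qed.

Lemma ln_prod (a : cell -> R) : (forall c, 0 < a c) ->
  ln (\prod_c a c) = \sum_c ln (a c).
Proof. exact: ln_prod_seq. Qed.

Lemma xlnx_prod (a : cell -> R) : (forall c, 0 <= a c) ->
  xlnx (\prod_c a c) = (\prod_c a c) * \sum_c lnz (a c).
Proof.
move=> ha; case: (boolP [forall c, 0 < a c]) => [/forallP hp|].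
  have hP : 0 < \prod_c a c by apply: prodr_gt0.
  rewrite xlnxE /lnz hP ln_prod //; congr (_ * _); apply: eq_bigr => c _.
  by rewrite hp.
rewrite negb_forall => /existsP [c0 hc0].
have z : a c0 = 0 by have := ha c0; move: hc0; rewrite lt_neqAle negb_and negbK => /orP [/eqP //|/negP]; done.
have -> : \prod_c a c = 0 by rewrite (bigD1 c0) //= z mul0r.
by rewrite xlnx0 mul0r.
Qed.

Definition hh (x : R) : R := - (xlnx x + xlnx (1 - x)).
Definition Phi (mu : cell -> R) : R := \sum_c hh (mu c).

Lemma entropyE (p : bm -> R) : entropy p = - \sum_D xlnx (p D).
Proof. reflexivity. Qed.

Lemma entropy_prodd mu : boxv mu -> entropy (prodd mu) = Phi mu.
Proof.
move=> hb.
rewrite entropyE /Phi /hh sumrN; congr (- _).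
transitivity (\sum_(D : bm) prodd mu D * \sum_c lnz (gf mu c (D c))).
  apply: eq_bigr => D _; rewrite /prodd xlnx_prod // => c.
  by rewrite /gf; case: (D c); have := hb c; lra.
transitivity (\sum_c \sum_(D : bm) prodd mu D * lnz (gf mu c (D c))).
  rewrite exchange_big /=; apply: eq_bigr => D _; by rewrite big_distrr.
apply: eq_bigr => c _.
rewrite (marg_prod mu c (fun b => lnz (gf mu c b))) /= !xlnxE.
done.
Qed.
Lemma sum_ge_term (I : finType) (F : I -> R) (i0 : I) : (forall i, 0 <= F i) -> F i0 <= \sum_i F i.
Proof.
move=> h; rewrite (bigD1 i0) //= lerDl; apply: sumr_ge0 => i _; exact: h.
Qed.

Lemma distr_sum {q : bm -> R} : is_distr q -> \sum_D q D = 1.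
Proof. by case=> _ h; exact: h. Qed.
Lemma distr_ge0 (q : bm -> R) D : is_distr q -> 0 <= q D.
Proof. by case=> h _; apply/RleP; exact: h. Qed.

Arguments distr_ge0 {q} D.
Lemma marg_box q : is_distr q -> boxv (marg q).
Proof.
move=> hq c; apply/andP; split.
  apply: sumr_ge0 => D _; apply: mulr_ge0; first exact: distr_ge0.
  by rewrite /ind; case: (D c); lra.
rewrite -(distr_sum hq) /marg; apply: ler_sum => D _.
have := distr_ge0 D hq; rewrite /ind; case: (D c); lra.
Qed.

Lemma marg_ge q D c : is_distr q -> q D <= gf (marg q) c (D c).
Proof.
move=> hq; rewrite /gf; case hD: (D c).
  have := @sum_ge_term _ (fun D' => q D' * ind (D' c)) D.
  rewrite /ind hD mulr1; apply => D'; apply: mulr_ge0; first exact: distr_ge0.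
  by case: (D' c); lra.
have -> : 1 - marg q c = \sum_D' q D' * (1 - ind (D' c)).
  rewrite -{1}(distr_sum hq) /marg -sumrB; apply: eq_bigr => D' _; ring.
have := @sum_ge_term _ (fun D' => q D' * (1 - ind (D' c))) D.
rewrite /ind hD subr0 mulr1; apply => D'; apply: mulr_ge0; first exact: distr_ge0.
by case: (D' c); lra.
Qed.

Arguments marg_box {q}.
Arguments marg_ge {q D c}.
Arguments exp_gen {q} c.
Lemma gibbs q : is_distr q -> entropy q <= Phi (marg q).
Proof.
move=> hq; set nu := marg q.
have hb := marg_box hq.
have key : forall D, q D * \sum_c lnz (gf nu c (D c)) - xlnx (q D) <= prodd nu D - q D.
  move=> D; have q0 := distr_ge0 D hq.
  case: (ltrP 0 (q D)) => hqD; last first.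
    have -> : q D = 0 by apply/le_anti/andP.
    by rewrite xlnx0 mul0r subr0 subr0; exact: prodd_ge0.
  have hpos : forall c, 0 < gf nu c (D c).
    by move=> c; apply: (lt_le_trans hqD); exact: marg_ge.
  have -> : \sum_c lnz (gf nu c (D c)) = ln (prodd nu D).
    rewrite /prodd ln_prod //; apply: eq_bigr => c _; by rewrite /lnz hpos.
  have hp : 0 < prodd nu D by apply: prodr_gt0 => c _.
  rewrite xlnxE /lnz hqD.
  have h1 := ln_le (divr_gt0 hp hqD).
  rewrite lnM ?invr_gt0 // lnV // in h1.
  have h2 : q D * (ln (prodd nu D) - ln (q D)) <= q D * (prodd nu D / q D - 1).
    by apply: ler_wpM2l => //; lra.
  have h3 : q D * (prodd nu D / q D) = prodd nu D.
    by rewrite mulrC -mulrA mulVf ?mulr1 // gt_eqF.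
  lra.
have hs : \sum_D (q D * \sum_c lnz (gf nu c (D c)) - xlnx (q D)) <= 0.
  apply: le_trans (ler_sum _ (fun D _ => key D)) _.
  by rewrite sumrB prodd_sum (distr_sum hq) subrr.
have hE : \sum_D q D * \sum_c lnz (gf nu c (D c)) = - Phi nu.
  transitivity (\sum_c \sum_(D : bm) q D * lnz (gf nu c (D c))).
    rewrite exchange_big /=; apply: eq_bigr => D _; by rewrite big_distrr.
  rewrite /Phi -sumrN; apply: eq_bigr => c _.
  rewrite (exp_gen c (fun b => lnz (gf nu c b)) (distr_sum hq)) /hh /= !xlnxE.
  rewrite opprK; done.
rewrite entropyE; rewrite sumrB hE in hs; lra.
Qed.
Lemma xlnx_tangent (a s : R) : 0 <= a -> 0 < s -> a - s <= xlnx a - a * ln s.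
Proof.
move=> ha hs; case: (ltrP 0 a) => h0; last first.
  have -> : a = 0 by apply/le_anti/andP.
  rewrite xlnx0 mul0r subr0 sub0r; lra.
rewrite xlnxE /lnz h0.
have := ln_le (divr_gt0 hs h0); rewrite lnM ?invr_gt0 // lnV // => h1.
have h2 : a * (ln s - ln a) <= a * (s / a - 1) by apply: ler_wpM2l; lra.
have h3 : a * (s / a) = s by rewrite mulrC -mulrA mulVf ?mulr1 // gt_eqF.
lra.
Qed.

Arguments xlnx_tangent {a s}.
Lemma xlnx_tangent_lt (a s : R) : 0 <= a -> 0 < s -> a != s -> a - s < xlnx a - a * ln s.
Proof.
move=> ha hs hne; case: (ltrP 0 a) => h0; last first.
  have -> : a = 0 by apply/le_anti/andP.
  rewrite xlnx0 mul0r subr0 sub0r; lra.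
rewrite xlnxE /lnz h0.
have hne' : s / a != 1.
  apply/eqP => e; move/eqP: hne; apply; apply/esym.
  by rewrite -(mulr1 a) -e mulrC -mulrA mulVf ?mulr1 // gt_eqF.
have := ln_lt (divr_gt0 hs h0) hne'; rewrite lnM ?invr_gt0 // lnV // => h1.
have h2 : a * (ln s - ln a) < a * (s / a - 1) by rewrite ltr_pM2l //; lra.
have h3 : a * (s / a) = s by rewrite mulrC -mulrA mulVf ?mulr1 // gt_eqF.
lra.
Qed.

Arguments xlnx_tangent_lt {a s}.
Lemma xlnx_conv (a b : R) : 0 <= a -> 0 <= b -> 2 * xlnx ((a + b) / 2) <= xlnx a + xlnx b.
Proof.
move=> ha hb; set s := (a + b) / 2.
case: (ltrP 0 s) => hs; last first.
  have ea : a = 0 by rewrite /s in hs; lra.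
  have eb : b = 0 by rewrite /s in hs; lra.
  have es : s = 0 by rewrite /s ea eb; field.
  rewrite es !xlnx0 ea eb !xlnx0; lra.
have := xlnx_tangent ha hs; have := xlnx_tangent hb hs.
rewrite [xlnx s]xlnxE /lnz hs.
have : 2 * s = a + b by rewrite /s; field.
move=> e h1 h2.
have : 2 * (s * ln s) = (a + b) * ln s by rewrite mulrA e.
lra.
Qed.

Lemma xlnx_conv_lt (a b : R) : 0 <= a -> 0 <= b -> a != b ->
  2 * xlnx ((a + b) / 2) < xlnx a + xlnx b.
Proof.
move=> ha hb hne; set s := (a + b) / 2.
have hs : 0 < s.
  rewrite /s; case: (ltrP 0 a) => h; first lra.
  have ea : a = 0 by apply/le_anti/andP.
  have : b != 0 by rewrite -ea eq_sym.
  rewrite ea; move=> hb0; have : 0 < b by rewrite lt_def hb0 hb.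
  lra.
have has : a != s.
  apply/eqP => e; move/eqP: hne; apply; rewrite /s in e; lra.
have := xlnx_tangent_lt ha hs has; have := xlnx_tangent hb hs.
rewrite [xlnx s]xlnxE /lnz hs.
have : 2 * s = a + b by rewrite /s; field.
move=> e h1 h2.
have : 2 * (s * ln s) = (a + b) * ln s by rewrite mulrA e.
lra.
Qed.

Arguments xlnx_conv {a b}.
Arguments xlnx_conv_lt {a b}.
Lemma frpE T (p : bm -> R) : fr_p T p = \sum_D p D * fr T D.
Proof. reflexivity. Qed.

Lemma frp_mid T (p p' : bm -> R) :
  2 * fr_p T (fun D => (p D + p' D) / 2) = fr_p T p + fr_p T p'.
Proof.
rewrite !frpE mulr_sumr -big_split /=; apply: eq_bigr => D _; by field.
Qed.

Lemma maxent_unique S (p p' : bm -> R) :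
  is_maxent S p -> is_maxent S p' -> forall D, p D = p' D.
Proof.
move=> [[hp hpc] hpm] [[hp' hp'c] hp'm].
set r := fun D => (p D + p' D) / 2.
have hr : feasible S r.
  have h1 : forall D, Rle R0 (r D).
    move=> D; apply/RleP; rewrite R0E /r; have := distr_ge0 D hp; have := distr_ge0 D hp'.
    lra.
  have h2 : \sum_D r D = 1.
    have := distr_sum hp; have := distr_sum hp'.
    rewrite /r -big_distrl big_split /= => -> ->; by field.
  have h3 : forall T, List.In T S -> fr_p T r = talpha T.
    move=> T hT; have := frp_mid T p p'; rewrite (hpc T hT) (hp'c T hT).
    rewrite -/r; move=> e; rewrite -[LHS]mul1r.
    have -> : (1 : R) = 2^-1 * 2 by field.
    rewrite -mulrA e; by field.
  by split; first split.
have /RleP e1 := hpm _ hr.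
have /RleP e2 := hpm _ (conj hp' hp'c).
have /RleP e3 := hp'm _ (conj hp hpc).
move=> D; apply/eqP; apply: contraT => hne.
have hlt : \sum_D0 2 * xlnx (r D0) < \sum_D0 (xlnx (p D0) + xlnx (p' D0)).
  rewrite (bigD1 D) //= [X in _ < X](bigD1 D) //=.
  apply: ltr_leD.
    by apply: xlnx_conv_lt => //; apply: distr_ge0.
  apply: ler_sum => D0 _; apply: xlnx_conv; apply: distr_ge0 => //.
rewrite -mulr_sumr big_split /= in hlt.
rewrite !entropyE in e1 e2 e3.
lra.
Qed.

Lemma pstar_unique S (p : bm -> R) : is_maxent S p -> forall D, pstar S D = p D.
Proof.
move=> hp.
exact: (maxent_unique _ _ _ (epsilon_spec (inhabits (fun _ : bm => R0)) (is_maxent S) (ex_intro _ p hp)) hp).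
Qed.
Definition cellsum (T : tile n m) (mu : cell -> R) : R :=
  \sum_(i in trows T) \sum_(j in tcols T) mu (i, j).
Definition frm (T : tile n m) (mu : cell -> R) : R := cellsum T mu / area_size T.
Definition MF (S : tileset n m) (mu : cell -> R) :=
  boxv mu /\ forall T, List.In T S -> frm T mu = talpha T.

Lemma frE T (D : bm) : fr T D = (\sum_(i in trows T) \sum_(j in tcols T) ind (D (i, j))) / area_size T.
Proof. reflexivity. Qed.

Lemma frp_marg T q : fr_p T q = frm T (marg q).
Proof.
rewrite frpE /frm /cellsum /marg.
under eq_bigr do rewrite frE mulrA.
rewrite -big_distrl /=; congr (_ / _).
under eq_bigr do rewrite big_distrr /=.
rewrite exchange_big /=; apply: eq_bigr => i _.
under eq_bigr do rewrite big_distrr /=.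
by rewrite exchange_big.
Qed.

Lemma frm_ext T (f g : cell -> R) :
  (forall i j, i \in trows T -> j \in tcols T -> f (i, j) = g (i, j)) -> frm T f = frm T g.
Proof.
move=> h; rewrite /frm /cellsum; congr (_ / _); apply: eq_bigr => i hi.
by apply: eq_bigr => j hj; apply: h.
Qed.

Lemma feasible_marg S q : feasible S q -> MF S (marg q).
Proof.
case=> hq hc; split; first exact: marg_box.
by move=> T hT; rewrite -frp_marg; apply: hc.
Qed.

Lemma feasible_prodd S mu : MF S mu -> feasible S (prodd mu).
Proof.
case=> hb hc; split; first split.
- by move=> D; apply/RleP; rewrite R0E; apply: prodd_ge0.
- exact: prodd_sum.
- move=> T hT; rewrite frp_marg -(hc T hT); apply: frm_ext => i j _ _.
  exact: marg_prodd.
Qed.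

Lemma maxent_prodd S nu : MF S nu -> (forall rho, MF S rho -> Phi rho <= Phi nu) ->
  is_maxent S (prodd nu).
Proof.
move=> hnu hmax; split; first exact: feasible_prodd.
move=> q hq; apply/RleP; rewrite entropy_prodd; last by case: hnu.
apply: le_trans (gibbs _ (proj1 hq)) _; apply: hmax; exact: feasible_marg.
Qed.

Lemma pstar_prodd S nu : MF S nu -> (forall rho, MF S rho -> Phi rho <= Phi nu) ->
  forall D, pstar S D = prodd nu D.
Proof. move=> h1 h2; apply: pstar_unique; exact: maxent_prodd. Qed.

Lemma area_pos (T : tile n m) : valid_tile T -> 0 < area_size T.
Proof.
case=> h1 h2; rewrite /area_size INRE ltr0n muln_gt0 !card_gt0; by rewrite h1 h2.
Qed.

Lemma area_sum (T : tile n m) : area_size T = \sum_(i in trows T) \sum_(j in tcols T) (1 : R).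
Proof.
rewrite /area_size INRE natrM; under eq_bigr do rewrite sumr_const.
by rewrite sumr_const mulr_natl.
Qed.

Lemma force S rho Tb i j : MF S rho -> List.In Tb S -> valid_tile Tb -> exact_tile Tb ->
  i \in trows Tb -> j \in tcols Tb -> rho (i, j) = talpha Tb.
Proof.
case=> hb hc hT hv he hi hj.
have hf := hc Tb hT; rewrite /frm in hf.
have ha := area_pos _ hv.
have hcs : cellsum Tb rho = talpha Tb * area_size Tb.
  by rewrite -hf mulrAC -mulrA mulfV ?mulr1 // gt_eqF.
case: he => he; rewrite he in hcs *; rewrite ?R0E ?R1E in hcs *.
- rewrite mul0r /cellsum in hcs.
  have h1 := @psumr_eq0P _ _ (fun i => i \in trows Tb) (fun i => \sum_(j in tcols Tb) rho (i, j)).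
  have := h1 (fun i _ => sumr_ge0 _ (fun j _ => proj1 (andP (hb (i, j))))) hcs _ hi.
  move=> h2; exact: (psumr_eq0P (fun j _ => proj1 (andP (hb (i, j)))) h2 hj).
- have hs : \sum_(i in trows Tb) \sum_(j in tcols Tb) (1 - rho (i, j)) = 0.
    under eq_bigr do rewrite sumrB.
    by rewrite sumrB -area_sum -/(cellsum Tb rho) hcs mul1r subrr.
  have hge : forall i j, 0 <= 1 - rho (i, j) by move=> i' j'; have := hb (i', j'); lra.
  have := @psumr_eq0P _ _ (fun i => i \in trows Tb) (fun i => \sum_(j in tcols Tb) (1 - rho (i, j)))
    (fun i _ => sumr_ge0 _ (fun j _ => hge i j)) hs _ hi.
  move=> h2; have := psumr_eq0P (fun j _ => hge i j) h2 hj; lra.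
Qed.
Arguments force {S rho Tb i j}.
Definition areab (S : tileset n m) (c : cell) : bool :=
  has (fun T => (c.1 \in trows T) && (c.2 \in tcols T)) S.

Lemma areab_in S i j : areab S (i, j) -> in_area S i j.
Proof.
elim: S => [|T S IH] //= /orP [/andP [hi hj]|h].
  by exists T; split; [left|].
by have [T' [h1 h2]] := IH h; exists T'; split; [right|].
Qed.

Lemma in_areab S i j : in_area S i j -> areab S (i, j).
Proof.
case=> T [hT [hi hj]]; elim: S hT => [|T' S IH] //= [e|h].
  by subst T'; rewrite /= hi hj.
by rewrite IH ?orbT.
Qed.

Lemma areab_cat S1 S2 c : areab (S1 ++ S2) c = areab S1 c || areab S2 c.
Proof. by rewrite /areab has_cat. Qed.

Lemma hh_half x : 0 <= x <= 1 -> hh x <= hh (1 / 2).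
Proof.
move=> /andP [h0 h1].
have h := @xlnx_conv x (1 - x) h0 (ltac:(lra)).
have e : (x + (1 - x)) / 2 = 1 / 2 by field.
have e2 : 1 - 1 / 2 = 1 / 2 :> R by field.
rewrite e in h; rewrite /hh e2; lra.
Qed.

Lemma Phi_split (A : pred cell) f :
  Phi f = \sum_(c | A c) hh (f c) + \sum_(c | ~~ A c) hh (f c).
Proof. by rewrite /Phi (bigID A). Qed.

Lemma block (M S B : tileset n m) (A : pred cell) mu :
  MF M mu -> (forall rho, MF M rho -> Phi rho <= Phi mu) ->
  (forall T, List.In T S -> List.In T M) ->
  (forall T, List.In T S -> forall i j, i \in trows T -> j \in tcols T -> A (i, j)) ->
  (forall T, List.In T B -> List.In T S /\ valid_tile T /\ exact_tile T) ->
  (forall T, List.In T M -> List.In T S \/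
     (forall i j, i \in trows T -> j \in tcols T -> A (i, j) -> in_area B i j)) ->
  MF S (fun c => if A c then mu c else 1 / 2) /\
  (forall rho, MF S rho -> Phi rho <= Phi (fun c => if A c then mu c else 1 / 2)).
Proof.
move=> hmu hmax hSM hSA hB hM.
set nu := fun c => if A c then mu c else 1 / 2.
have hbnu : boxv nu.
  move=> c; rewrite /nu; case: (A c); first exact: (proj1 hmu).
  apply/andP; split; lra.
split.
  split => // T hT; rewrite -((proj2 hmu) T (hSM T hT)); apply: frm_ext => i j hi hj.
  by rewrite /nu (hSA T hT i j hi hj).
move=> rho hrho.
set rho' := fun c => if A c then rho c else mu c.
have hrho' : MF M rho'.
  split.
    by move=> c; rewrite /rho'; case: (A c); [exact: (proj1 hrho)| exact: (proj1 hmu)].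
  move=> T hT; case: (hM T hT) => [hS|hc].
    rewrite -((proj2 hrho) T hS); apply: frm_ext => i j hi hj.
    by rewrite /rho' (hSA T hS i j hi hj).
  rewrite -((proj2 hmu) T hT); apply: frm_ext => i j hi hj.
  rewrite /rho'; case hA: (A (i, j)) => //.
  have [Tb [hTb [hi' hj']]] := hc i j hi hj hA.
  have [hTbS [hv he]] := hB Tb hTb.
  rewrite (force hrho hTbS hv he hi' hj') (force hmu (hSM _ hTbS) hv he hi' hj') //.
have h1 := hmax rho' hrho'.
rewrite (Phi_split A) (Phi_split A mu) in h1.
have e1 : \sum_(c | A c) hh (rho' c) = \sum_(c | A c) hh (rho c).
  by apply: eq_bigr => c hc; rewrite /rho' hc.
have e2 : \sum_(c | ~~ A c) hh (rho' c) = \sum_(c | ~~ A c) hh (mu c).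
  by apply: eq_bigr => c /negbTE hc; rewrite /rho' hc.
rewrite e1 e2 in h1.
rewrite (Phi_split A) (Phi_split A nu).
have e3 : \sum_(c | A c) hh (nu c) = \sum_(c | A c) hh (mu c).
  by apply: eq_bigr => c hc; rewrite /nu hc.
have e4 : \sum_(c | ~~ A c) hh (nu c) = \sum_(c | ~~ A c) hh (1 / 2).
  by apply: eq_bigr => c /negbTE hc; rewrite /nu hc.
have h2 : \sum_(c | ~~ A c) hh (rho c) <= \sum_(c | ~~ A c) hh (1 / 2).
  by apply: ler_sum => c _; apply: hh_half; exact: (proj1 hrho).
rewrite e3 e4; lra.
Qed.
Lemma KLE (p q : bm -> R) :
  KLdiv p q = \sum_D (if Rlt_dec R0 (p D) then p D * ln (p D / q D) else 0).
Proof. reflexivity. Qed.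

Lemma prod_pos_each (a : cell -> R) c : (forall c, 0 <= a c) -> 0 < \prod_c a c -> 0 < a c.
Proof.
move=> h0 hp; case: (ltrP 0 (a c)) => // h.
have z : a c = 0 by apply/le_anti; rewrite h h0.
by move: hp; rewrite (bigD1 c) //= z mul0r ltxx.
Qed.

Lemma KL_prodd mu (A : pred cell) : boxv mu ->
  KLdiv (prodd mu) (prodd (fun c => if A c then mu c else 1 / 2)) =
  \sum_c (if A c then 0 else hh (1 / 2) - hh (mu c)).
Proof.
move=> hb; set nu := fun c => if A c then mu c else 1 / 2.
have hbnu : boxv nu.
  by move=> c; rewrite /nu; case: (A c); [exact: hb| apply/andP; split; lra].
have gmu0 : forall D c, 0 <= gf mu c (D c).
  by move=> D c; rewrite /gf; case: (D c); have := hb c; lra.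
rewrite KLE.
transitivity (\sum_(D : bm) prodd mu D * \sum_c (lnz (gf mu c (D c)) - lnz (gf nu c (D c)))).
  apply: eq_bigr => D _; case: Rlt_dec => [/RltP hp|hp] /=; last first.
    have z : prodd mu D = 0.
      apply/le_anti; rewrite prodd_ge0 // andbT; rewrite leNgt; apply/negP => /RltP //.
    by rewrite z mul0r.
  have hpos : forall c, 0 < gf mu c (D c) by move=> c; apply: prod_pos_each hp.
  have hnpos : forall c, 0 < gf nu c (D c).
    move=> c; rewrite /gf /nu; case: (A c); first exact: (hpos c).
    by case: (D c); lra.
  have hq : 0 < prodd nu D by apply: prodr_gt0 => c _.
  congr (_ * _); rewrite lnM ?invr_gt0 // lnV // /prodd !ln_prod // sumrB.
  by congr (_ - _); apply: eq_bigr => c _; rewrite /lnz ?hpos ?hnpos.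
transitivity (\sum_c \sum_(D : bm) prodd mu D * (lnz (gf mu c (D c)) - lnz (gf nu c (D c)))).
  rewrite exchange_big /=; apply: eq_bigr => D _; by rewrite big_distrr.
apply: eq_bigr => c _.
rewrite (marg_prod mu c (fun b => lnz (gf mu c b) - lnz (gf nu c b))) /= /gf /nu.
case: (A c); first by rewrite !subrr !mulr0 addr0.
have e2 : 1 - 1 / 2 = 1 / 2 :> R by field.
rewrite /hh !xlnxE e2; by field.
Qed.
Local Notation K := #|{: cell}|.
Definition tofun (v : 'rV[R]_K) : cell -> R := fun c => v ord0 (enum_rank c).
Definition fromfun (f : cell -> R) : 'rV[R]_K := \row_i f (enum_val i).

Lemma tofun_fromfun f : tofun (fromfun f) = f.
Proof. apply: functional_extensionality => c; by rewrite /tofun /fromfun mxE enum_rankK. Qed.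

Lemma cont_sumP (k : nat) (I : Type) (s : seq I) (P : pred I) (F : I -> 'rV[R]_k -> R) :
  (forall i, continuous (F i)) -> continuous (fun v => \sum_(i <- s | P i) F i v).
Proof.
move=> cF; elim: s => [|a s IH].
  under eq_fun do rewrite big_nil. exact: cst_continuous.
under eq_fun do rewrite big_cons.
case: (P a) => //.
by move=> v; exact: (@continuousD R R^o _ (F a) _ v (cF a v) (IH v)).
Qed.

Lemma cont_tofun c : continuous (fun v : 'rV[R]_K => tofun v c).
Proof. move=> v; exact: (@coord_continuous R 1 K ord0 (enum_rank c) v). Qed.

Lemma cont_cellsum (T : tile n m) : continuous (fun v : 'rV[R]_K => cellsum T (tofun v)).
Proof.
rewrite /cellsum; apply: cont_sumP => i; apply: cont_sumP => j; exact: cont_tofun.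
Qed.

Lemma cont_hh : continuous hh.
Proof. by apply: cont_pt => x; exact: hh_cont_std. Qed.

Lemma cont_Phi : continuous (fun v : 'rV[R]_K => Phi (tofun v)).
Proof.
rewrite /Phi; apply: cont_sumP => c v.
apply: continuous_comp; first exact: cont_tofun.
exact: cont_hh.
Qed.

Local Open Scope classical_set_scope.
Lemma ex_max_MF (S : tileset n m) : (forall T, List.In T S -> valid_tile T) ->
  (exists mu, MF S mu) -> exists mu, MF S mu /\ forall rho, MF S rho -> Phi rho <= Phi mu.
Proof.
move=> hv [mu0 h0].
pose C := [set v : 'rV[R]_K | MF S (tofun v)].
have hC : closed C.
  have -> : C = (\bigcap_(c in setT) [set v : 'rV[R]_K | 0 <= tofun v c]) `&`
             (\bigcap_(c in setT) [set v : 'rV[R]_K | tofun v c <= 1]) `&`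
             (\bigcap_(T in [set T | List.In T S])
                 [set v : 'rV[R]_K | cellsum T (tofun v) = talpha T * area_size T]).
    apply/seteqP; split => v /=.
      move=> [hb hc]; split; first split.
      - by move=> c _ /=; have /andP [] := hb c.
      - by move=> c _ /=; have /andP [] := hb c.
      - move=> T hT /=; rewrite -(hc T hT) /frm mulrAC -mulrA mulfV ?mulr1 //.
        by rewrite gt_eqF // area_pos //; apply: hv.
    move=> [[h1 h2] h3]; split.
      by move=> c; rewrite (h1 c I) (h2 c I).
    move=> T hT; rewrite /frm (h3 T hT) -mulrA mulfV ?mulr1 //.
    by rewrite gt_eqF // area_pos //; apply: hv.
  apply: closedI; first apply: closedI.
  - apply: closed_bigI => c _; apply: closed_gef; exact: cont_tofun.
  - apply: closed_bigI => c _; apply: closed_lef; exact: cont_tofun.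
  - apply: closed_bigI => T _; apply: closed_eqf; exact: cont_cellsum.
have hne : exists v, C v by exists (fromfun mu0); rewrite /C /= tofun_fromfun.
have hbox : forall v, C v -> forall i, 0 <= v ord0 i <= 1.
  move=> v [hb _] i; have := hb (enum_val i); by rewrite /tofun enum_valK.
have [c [hc hmax]] := ex_max_box _ _ _ hne hC hbox cont_Phi.
exists (tofun c); split => // rho hrho.
rewrite -{1}(tofun_fromfun rho); apply: hmax; by rewrite /C /= tofun_fromfun.
Qed.

Local Close Scope classical_set_scope.
Lemma KL_block (M S B : tileset n m) mu :
  MF M mu -> (forall rho, MF M rho -> Phi rho <= Phi mu) ->
  (forall T, List.In T S -> List.In T M) ->
  (forall T, List.In T B -> List.In T S /\ valid_tile T /\ exact_tile T) ->
  (forall T, List.In T M -> List.In T S \/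
     (forall i j, i \in trows T -> j \in tcols T -> areab S (i, j) -> in_area B i j)) ->
  KL M S = \sum_c (if areab S c then 0 else hh (1 / 2) - hh (mu c)).
Proof.
move=> hmu hmax hSM hB hM.
have hSA : forall T, List.In T S -> forall i j, i \in trows T -> j \in tcols T -> areab S (i, j).
  by move=> T hT i j hi hj; apply: in_areab; exists T.
have [h1 h2] := @block M S B (areab S) mu hmu hmax hSM hSA hB hM.
rewrite /KL (functional_extensionality _ _ (pstar_prodd _ _ hmu hmax)).
rewrite (functional_extensionality _ _ (pstar_prodd _ _ h1 h2)).
apply: KL_prodd; exact: (proj1 hmu).
Qed.
End Alg.
Arguments feasible_marg {n m S q}.
Arguments MF {n m}.
Arguments Phi {n m}.
Arguments prodd {n m}.
Arguments ex_max_MF {n m S}.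
Arguments areab_in {n m S i j}.
Arguments in_areab {n m S i j}.
Arguments areab_cat {n m}.
Arguments marg {n m}.
Arguments areab {n m}.

Theorem theorem7 (n m : nat) (Hn : (0 < n)%N) (Hm : (0 < m)%N)
  (Ts Us Bs : tileset n m)
  (Hvalid : forall T, List.In T (Ts ++ Us ++ Bs) -> valid_tile T)
  (Hcons : consistent (Ts ++ Us ++ Bs))
  (Hexact : forall T, List.In T Bs -> exact_tile T)
  (Harea : forall i j, in_area Ts i j -> in_area Us i j -> in_area Bs i j) :
  dTUB Ts Us Bs = R1.
Proof.
pose M := Ts ++ Us ++ Bs.
have hM0 : exists mu, MF M mu.
  by case: Hcons => p hp; exists (marg p); exact: feasible_marg hp.
have [mu1 [hmu1 hmax1]] := ex_max_MF Hvalid hM0.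
have hBM : forall T, List.In T Bs -> List.In T M.
  by move=> T h; apply: List.in_or_app; right; apply: List.in_or_app; right.
have hBv : forall S : tileset n m, (forall T, List.In T Bs -> List.In T S) ->
    forall T, List.In T Bs -> List.In T S /\ valid_tile T /\ exact_tile T.
  move=> S hS T h; split; first exact: hS.
  by split; [apply: Hvalid; apply: hBM | apply: Hexact].
have hSA_M : forall T, List.In T M -> forall i j, i \in trows T -> j \in tcols T -> areab M (i, j).
  by move=> T hT i j hi hj; apply: in_areab; exists T.
have [hmu hmax] := @block n m M M Bs (areab M) mu1 hmu1 hmax1 (fun T h => h) hSA_M
  (hBv M hBM) (fun T h => or_introl h).
set mu := fun c => if areab M c then mu1 c else 1 / 2.
have kz : forall c, ~~ areab M c -> hh (1 / 2) - hh (mu c) = 0.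
  by move=> c /negbTE h; rewrite /mu h subrr.
have KU := @KL_block n m M (Us ++ Bs) Bs mu hmu hmax
  (fun T h => List.in_or_app _ _ _ (or_intror h))
  (hBv _ (fun T h => List.in_or_app _ _ _ (or_intror h))) _.
have KT := @KL_block n m M (Ts ++ Bs) Bs mu hmu hmax
  (fun T h => match List.in_app_or _ _ _ h with
              | or_introl h1 => List.in_or_app _ _ _ (or_introl h1)
              | or_intror h1 => List.in_or_app _ _ _ (or_intror (List.in_or_app _ _ _ (or_intror h1))) end)
  (hBv _ (fun T h => List.in_or_app _ _ _ (or_intror h))) _.
have KB := @KL_block n m M Bs Bs mu hmu hmax hBM (hBv _ (fun T h => h)) _.
rewrite /dTUB /= -/M KU ?KT ?KB.
- set kB := \sum_c _.
  set kU := \sum_c _.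
  set kT := \sum_c _.
  have hsum : kU + kT = kB.
    rewrite /kU /kT /kB -big_split /=; apply: eq_bigr => [[i j]] _.
    have hz := kz (i, j).
    have hTU : areab Ts (i, j) -> areab Us (i, j) -> areab Bs (i, j).
      by move=> h1 h2; apply: in_areab; apply: Harea; apply: areab_in.
    rewrite /M !areab_cat in hz *.
    move: hz hTU.
    case: (areab Ts (i, j)); case: (areab Us (i, j)); case: (areab Bs (i, j)) => //= hz hTU.
    all: rewrite ?addr0 ?add0r //.
    + by have := hTU erefl erefl.
    + by rewrite hz // addr0.
  case: (Req_dec_T kB R0) => [e|hne] /=; first by [].
  transitivity ((kU + kT) / kB); first by [].
  rewrite hsum R1E divff //; apply/eqP; exact: hne.
- move=> T hT; case: (List.in_app_or _ _ _ hT) => [hTs|h].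
    by right => i j hi hj hA; exact: areab_in.
  case: (List.in_app_or _ _ _ h) => [hUs|hBs]; last by left.
  by right => i j hi hj hA; exact: areab_in.
- move=> T hT; case: (List.in_app_or _ _ _ hT) => [hTs|h].
    by left; apply: List.in_or_app; left.
  case: (List.in_app_or _ _ _ h) => [hUs|hBs]; last by left; apply: List.in_or_app; right.
  right => i j hi hj; rewrite areab_cat => /orP [ht|hb]; last exact: areab_in.
  apply: Harea; [exact: areab_in ht| by exists T].
- move=> T hT; case: (List.in_app_or _ _ _ hT) => [hTs|h]; last by left.
  right => i j hi hj; rewrite areab_cat => /orP [hu|hb]; last exact: areab_in.
  apply: Harea; [by exists T| exact: areab_in hu].
Qed.
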